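(* Let $\mathbf P\in\mathbb{R}^{n\times n}$ be symmetric positive definite and $\mathbf c\in\mathbb{R}^n$, and let $\ell_{\mathbf c,\mathbf P}:\mathcal{I}_{\mathbf P}\to\mathbb{R}$ be the function defined below. Then (1) $\ell_{\mathbf c,\mathbf P}$ is concave on $\mathcal{I}_{\mathbf P}$; and (2) $\ell_{\mathbf c,\mathbf P}(\beta)<0$ for all $\beta\in\mathcal{I}_{\mathbf P}$.
   Context: Let $\mathbf P=\mathbf V\mathbf D\mathbf V^\top$ be a spectral decomposition with $\mathbf V$ orthogonal and $\mathbf D$ diagonal with diagonal entries $\lambda_i=D_{ii}>0$, $i=1,\dots,n$. Let $\bar{\mathbf c}=\mathbf V^\top\mathbf c$ and $S(\bar{\mathbf c})=\{i\in\{1,\dots,n\}:\bar c_i\neq 0\}$. Let $\lambda_{\min}(\mathbf P)$ be the smallest eigenvalue of $\mathbf P$. Define the interval $\mathcal{I}_{\mathbf P}=(\lambda_{\min}(\mathbf P)^{-1},\infty)$ if there is $i\in S(\bar{\mathbf c})$ with $\lambda_i=\lambda_{\min}(\mathbf P)$, and $\mathcal{I}_{\mathbf P}=[\lambda_{\min}(\mathbf P)^{-1},\infty)$ otherwise. Define $$\ell_{\mathbf c,\mathbf P}(\beta)=-\beta-\sum_{i\in S(\bar{\mathbf c})}\bar c_i^2\,\frac{\lambda_i\beta}{\lambda_i\beta-1},\qquad \beta\in\mathcal{I}_{\mathbf P}.$$ *)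

(* Defs.v *)
From HB Require Import structures.
From mathcomp Require Import all_boot all_order all_algebra.
From mathcomp Require Import reals.
Set Implicit Arguments. Unset Strict Implicit. Unset Printing Implicit Defensive.
Import Order.TTheory GRing.Theory Num.Theory.
Local Open Scope ring_scope.

Section Defs.
Variable R : realType.

Definition sym_posdef n (P : 'M[R]_n) : Prop :=
  P^T = P /\ forall x : 'cV[R]_n, x != 0 -> 0 < (x^T *m P *m x) 0 0.

Definition orthogonal_mx n (V : 'M[R]_n) : Prop :=
  V^T *m V = 1%:M /\ V *m V^T = 1%:M.

Definition spectral_decomp n (P V : 'M[R]_n) (lam : 'rV[R]_n) : Prop :=
  orthogonal_mx V /\ (forall i, 0 < lam 0 i) /\ P = V *m diag_mx lam *m V^T.

Definition is_lambda_min n (P : 'M[R]_n) (lmin : R) : Prop :=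
  eigenvalue P lmin /\ forall a, eigenvalue P a -> lmin <= a.

Definition cbar n (V : 'M[R]_n) (c : 'cV[R]_n) : 'cV[R]_n := V^T *m c.

Definition I_P n (V : 'M[R]_n) (lam : 'rV[R]_n) (c : 'cV[R]_n) (lmin : R)
  : pred R :=
  fun beta =>
    if [exists i : 'I_n, (cbar V c i 0 != 0) && (lam 0 i == lmin)]
    then lmin^-1 < beta else lmin^-1 <= beta.

Definition ell n (V : 'M[R]_n) (lam : 'rV[R]_n) (c : 'cV[R]_n) (beta : R) : R :=
  - beta - \sum_(i < n | cbar V c i 0 != 0)
      (cbar V c i 0) ^+ 2 * (lam 0 i * beta / (lam 0 i * beta - 1)).

Definition concave_on (S : pred R) (f : R -> R) : Prop :=
  forall x y t, S x -> S y -> 0 <= t <= 1 ->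
    t * f x + (1 - t) * f y <= f (t * x + (1 - t) * y).

End Defs.

(* Main.v *)
Require Import Defs.
From HB Require Import structures.
From mathcomp Require Import all_boot all_order all_algebra.
From mathcomp Require Import reals.
From mathcomp Require Import ring lra.
Import Order.TTheory GRing.Theory Num.Theory.
Local Open Scope ring_scope.

Lemma lmin_pos (R : realType) n (P : 'M[R]_n) a :
  sym_posdef P -> eigenvalue P a -> 0 < a.
Proof.
move=> [_ pd] /eigenvalueP [v vP v0].
have := pd v^T; rewrite trmx_eq0 => /(_ v0).
rewrite trmxK vP -scalemxAl mxE.
have : 0 <= (v *m v^T) 0 0.
  rewrite mxE; apply: sumr_ge0 => j _; rewrite mxE -expr2; exact: sqr_ge0.
move=> h1 h2; nra.
Qed.

Lemma lam_eig (R : realType) n (P V : 'M[R]_n) lam i :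
  spectral_decomp P V lam -> eigenvalue P (lam 0 i).
Proof.
move=> [[VtV VVt] [_ ->]]; apply/eigenvalueP; exists (row i V^T).
  rewrite -row_mul !mulmxA VtV mul1mx mul_diag_mx.
  apply/rowP => j; rewrite !mxE; done.
apply/negP => /eqP h.
have : row i (V^T *m V) = 0 by rewrite row_mul h mul0mx.
rewrite VtV => /rowP /(_ i); rewrite !mxE eqxx /=. 
by move/eqP; rewrite oner_eq0.
Qed.

Lemma inv_convex (R : realType) (a b t : R) : 0 < a -> 0 < b -> 0 <= t <= 1 ->
  (t * a + (1 - t) * b)^-1 <= t * a^-1 + (1 - t) * b^-1.
Proof.
move=> a0 b0 /andP [t0 t1].
have s0 : 0 < t * a + (1 - t) * b by nra.
rewrite -subr_ge0.
have -> : t * a^-1 + (1 - t) * b^-1 - (t * a + (1 - t) * b)^-1 =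
  (t * a + (1 - t) * b)^-1 * a^-1 * b^-1 * (t * (1 - t) * (a - b) ^+ 2).
  by field; rewrite ?gt_eqF.
apply: mulr_ge0; last by apply: mulr_ge0; [nra | exact: sqr_ge0].
by rewrite !mulr_ge0 // ltW // invr_gt0.
Qed.

Lemma g_convex (R : realType) (l x y t : R) : 0 < l -> 1 < l * x -> 1 < l * y ->
  0 <= t <= 1 ->
  l * (t * x + (1 - t) * y) / (l * (t * x + (1 - t) * y) - 1) <=
  t * (l * x / (l * x - 1)) + (1 - t) * (l * y / (l * y - 1)).
Proof.
move=> l0 lx ly ht.
have gE : forall u : R, 1 < u -> u / (u - 1) = 1 + (u - 1)^-1.
  by move=> u u1; field; rewrite subr_eq0 gt_eqF.
have hz : 1 < l * (t * x + (1 - t) * y).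
  move: ht => /andP [t0 t1].
  rewrite (_ : l * (t * x + (1 - t) * y) = t * (l * x) + (1 - t) * (l * y)); last by ring.
  have h2 : 0 <= (1 - t) * (l * y - 1) by apply: mulr_ge0; lra.
  have [->|tp] := eqVneq t 0; first lra.
  have tq : 0 < t by rewrite lt_neqAle eq_sym tp t0.
  have h1 : 0 < t * (l * x - 1) by apply: mulr_gt0; lra.
  lra.
rewrite !gE //.
have -> : l * (t * x + (1 - t) * y) - 1 = t * (l * x - 1) + (1 - t) * (l * y - 1)
  by ring.
have := @inv_convex _ (l * x - 1) (l * y - 1) t.
rewrite !subr_gt0 => /(_ lx ly ht) h; lra.
Qed.

Theorem lemma2 (R : realType) (n : nat) (P V : 'M[R]_n) (lam : 'rV[R]_n)
  (c : 'cV[R]_n) (lmin : R) :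
  sym_posdef P ->
  spectral_decomp P V lam ->
  is_lambda_min P lmin ->
  concave_on (I_P V lam c lmin) (ell V lam c) /\
  (forall beta, I_P V lam c lmin beta -> ell V lam c beta < 0).
Proof.
move=> hP hS [hmin hle].
have m0 := @lmin_pos R n P lmin hP hmin.
have mle : forall i, lmin <= lam 0 i by move=> i; apply: hle; exact: (@lam_eig R n P V lam i hS).
have mi : lmin * lmin^-1 = 1 by rewrite mulfV // gt_eqF.
have mi0 : 0 < lmin^-1 by rewrite invr_gt0.
have key : forall beta, I_P V lam c lmin beta ->
    0 < beta /\ forall i, cbar V c i 0 != 0 -> 1 < lam 0 i * beta.
  move=> beta; rewrite /I_P; case: ifP => [_ hb|/negbT hn hb].
    split; first lra.
    move=> i _; have := mle i; nra.
  split; first lra.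
  move=> i ci; have : lmin < lam 0 i.
    rewrite lt_neqAle mle andbT; apply/negP => /eqP e.
    by move/existsP: hn; apply; exists i; rewrite ci e eqxx.
  nra.
split.
  move=> x y t Ix Iy ht.
  have [x0 hx] := key _ Ix; have [y0 hy] := key _ Iy.
  rewrite /ell.
  set F := fun b i => cbar V c i 0 ^+ 2 * (lam 0 i * b / (lam 0 i * b - 1)).
  rewrite -/(F x) -/(F y) -/(F (t * x + (1 - t) * y)).
  have H : 0 <= t * (\sum_(i < n | cbar V c i 0 != 0) F x i)
     + (1 - t) * (\sum_(i < n | cbar V c i 0 != 0) F y i)
     - \sum_(i < n | cbar V c i 0 != 0) F (t * x + (1 - t) * y) i.
    rewrite !mulr_sumr -big_split -sumrB /=.
    apply: sumr_ge0 => i ci; rewrite /F subr_ge0.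
    have E : forall A B C : R, t * (A * B) + (1 - t) * (A * C) = A * (t * B + (1 - t) * C)
      by move=> A B C; ring.
    rewrite E.
    apply: ler_wpM2l; first exact: sqr_ge0.
    apply: g_convex => //; last by apply: hy.
      by apply: lt_le_trans m0 (mle i).
    by apply: hx.
  lra.
move=> beta Ib; have [b0 hb] := key _ Ib.
rewrite /ell.
have : 0 <= \sum_(i < n | cbar V c i 0 != 0)
      cbar V c i 0 ^+ 2 * (lam 0 i * beta / (lam 0 i * beta - 1)).
  apply: sumr_ge0 => i ci; apply: mulr_ge0; first exact: sqr_ge0.
  have := hb i ci => h1.
  apply: divr_ge0; lra.
lra.
Qed.
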